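(* Let $\sigma$ be the substitution on $\{0,1\}$ given by $\sigma(0)=01$, $\sigma(1)=00$, let $X_\sigma\subset\{0,1\}^{\mathbb Z}$ be its subshift with shift map $S$, and let $T(x,z)=(Sx,z+1)$ on $X_\sigma\times\mathbb Z_3$. Then the minimal Cantor system $(X_\sigma\times\mathbb Z_3,T)$ is self-induced.
   Context: $X_\sigma$ is the set of bi-infinite sequences over $\{0,1\}$ all of whose finite subwords are subwords of $\sigma^k(a)$ for some letter $a$ and $k\ge1$; $S(x)_i=x_{i+1}$; $\mathbb Z_3$ is the $3$-adic integers. The system $(X_\sigma\times\mathbb Z_3,T)$ is a minimal Cantor system (a fact established separately in the paper). A minimal Cantor system $(X,T)$ is self-induced if there is a nonempty clopen proper $U\subsetneq X$ such that $(U,T_U)$, $T_U(x)=T^{r_U(x)}x$ with $r_U(x)=\inf\{n>0:T^nx\in U\}$, is topologically conjugate to $(X,T)$. *)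

(* Defs.v *)
From HB Require Import structures.
From mathcomp Require Import all_boot all_order all_algebra.
From mathcomp Require Import all_classical all_reals all_analysis.
Set Implicit Arguments. Unset Strict Implicit. Unset Printing Implicit Defensive.
Import Order.TTheory GRing.Theory Num.Theory.
Local Open Scope classical_set_scope.

(* The substitution sigma on {0,1} = bool (false = 0, true = 1):
   sigma(0) = 01, sigma(1) = 00, extended to words as a monoid morphism. *)
Definition sigma_letter (b : bool) : seq bool :=
  if b then [:: false; false] else [:: false; true].
Definition sigma_word (w : seq bool) : seq bool := flatten (map sigma_letter w).
Definition sigma_iter (k : nat) (a : bool) : seq bool := iter k sigma_word [:: a].

Notation biseq := {ptws int -> bool}.

Definition subword (x : biseq) (i : int) (n : nat) : seq bool :=
  [seq x (i + (j%:Z))%R | j <- iota 0 n].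

Definition X_sigma : set biseq :=
  [set x | forall (i : int) (n : nat),
     exists (a : bool) (k : nat), (1 <= k)%N /\ infix (subword x i n) (sigma_iter k a)].

Definition shift (x : biseq) : biseq := fun i => x (i + 1)%R.

(* 3-adic integers, represented by their digit sequences z = sum_n z_n 3^n,
   with the product (of discrete) topology. *)
Notation Z3 := {ptws nat -> discrete_topology 'I_3}.

(* z |-> z + 1 in Z_3 (odometer): digit n is incremented mod 3 exactly when
   all lower digits are 2 (carry). *)
Definition Z3_succ (z : Z3) : Z3 := fun n =>
  if [forall m : 'I_n, nat_of_ord (z (nat_of_ord m)) == 2%N]
  then (inord ((z n).+1 %% 3) : 'I_3)
  else z n.

Definition Tmap (p : biseq * Z3) : biseq * Z3 := (shift p.1, Z3_succ p.2).
Definition Xspace : set (biseq * Z3) := [set p | X_sigma p.1].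

(* Self-induced: a dynamical system (X, T) with X a subset of an ambient
   topological space A (subspace topology) is self-induced if there is a
   nonempty proper clopen U of X such that the induced system (U, T_U),
   T_U(x) = T^{r_U(x)} x with r_U the first return time, is topologically
   conjugate to (X, T) via a homeomorphism phi : U -> X (inverse psi). *)
Definition self_induced (A : topologicalType) (X : set A) (T : A -> A) : Prop :=
  exists U : set A,
    [/\ U `<=` X, U !=set0, U <> X,
        @open (subspace X) U & @closed (subspace X) U] /\
    (* return times to U are finite, so T_U is defined on U *)
    (forall x, U x -> exists n, (0 < n)%N /\ U (iter n T x)) /\
    exists phi psi : A -> A,
      [/\ {within U, continuous phi}, {within X, continuous psi},
          (forall x, U x -> X (phi x) /\ psi (phi x) = x),
          (forall y, X y -> U (psi y) /\ phi (psi y) = y) &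
          (* phi o T_U = T o phi, with r_U(x) = n the first return time *)
          (forall x n, U x -> (0 < n)%N -> U (iter n T x) ->
             (forall m, (0 < m < n)%N -> ~ U (iter m T x)) ->
             phi (iter n T x) = T (phi x))].

(* Main.v *)
Require Import Defs.
From mathcomp Require Import all_boot all_order all_algebra.
From mathcomp Require Import all_classical all_reals all_analysis.
From mathcomp Require Import zify.
Import Order.TTheory GRing.Theory Num.Theory.
Local Open Scope classical_set_scope.

Lemma sigma_cons a w : sigma_word (a :: w) = [:: false; ~~ a] ++ sigma_word w.
Proof. by case: a. Qed.

Lemma sigma_cat u v : sigma_word (u ++ v) = sigma_word u ++ sigma_word v.
Proof. by rewrite /sigma_word map_cat flatten_cat. Qed.

Lemma size_sigma w : size (sigma_word w) = (size w).*2.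
Proof. by elim: w => // a w IH; rewrite sigma_cons /= IH. Qed.

Lemma nth_sigma w i : nth false (sigma_word w) i = odd i && ~~ nth true w i./2.
Proof.
elim: w i => [|a w IH] i.
  by rewrite !nth_nil andbF.
rewrite sigma_cons; case: i => [|[|i]] //=.
by rewrite IH /= negbK.
Qed.

Lemma sigma_iterS k a : sigma_iter k.+1 a = sigma_word (sigma_iter k a).
Proof. by rewrite /sigma_iter iterS. Qed.

Lemma size_sigma_iter k a : size (sigma_iter k a) = 2 ^ k.
Proof.
elim: k => [|k IH]; first by [].
by rewrite sigma_iterS size_sigma IH expnS -muln2 mulnC.
Qed.

Lemma infix_sigma u v : infix u v -> infix (sigma_word u) (sigma_word v).
Proof.
move/infixP=> [s [t ->]]; rewrite !sigma_cat; exact: infix_infix.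
Qed.

Lemma no11 k a i : ~~ (nth false (sigma_iter k a) i && nth false (sigma_iter k a) i.+1).
Proof.
case: k => [|k].
  rewrite /sigma_iter /=; case: i => [|i] /=; first by rewrite andbF.
  by rewrite !nth_nil.
rewrite sigma_iterS !nth_sigma /=; by case: (odd i); rewrite ?andbF.
Qed.

Lemma nthT_nthF (s : seq bool) i : i < size s -> nth true s i = nth false s i.
Proof. exact: set_nth_default. Qed.

Lemma no00odd k a r : odd r -> r + 2 < size (sigma_word (sigma_iter k a)) ->
  nth false (sigma_word (sigma_iter k a)) r || nth false (sigma_word (sigma_iter k a)) (r + 2).
Proof.
move=> odr; rewrite size_sigma => hr.
rewrite !nth_sigma odr addn2 /= odr /= -!negb_and.
have e : (r.+2)./2 = (r./2).+1 by [].
have h2 := odd_double_half r; rewrite odr -muln2 in h2.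
rewrite -muln2 in hr.
rewrite !nthT_nthF ?no11 //; lia.
Qed.

Lemma infix_nth (u v : seq bool) : infix u v ->
  exists p, p + size u <= size v /\ forall j, j < size u -> nth false u j = nth false v (p + j).
Proof.
move/infixP=> [s [t ->]]; exists (size s); split.
  by rewrite !size_cat addnA leq_addr.
by move=> j hj; rewrite nth_cat ltnNge leq_addr /= addKn nth_cat hj.
Qed.

Lemma nth_infix (u v : seq bool) p :
  p + size u <= size v -> (forall j, j < size u -> nth false u j = nth false v (p + j)) ->
  infix u v.
Proof.
move=> hs hn; have -> : u = take (size u) (drop p v).
  apply: (@eq_from_nth _ false).
    rewrite size_take size_drop; case: ltnP => //; lia.
  move=> j hj; rewrite nth_take // nth_drop; exact: hn.
apply/infixP; exists (take p v), (drop (size u) (drop p v)).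
by rewrite !cat_take_drop.
Qed.

Lemma size_subword (x : biseq) i n : size (subword x i n) = n.
Proof. by rewrite size_map size_iota. Qed.

Lemma nth_subword (x : biseq) i n j : j < n -> nth false (subword x i n) j = x (i + j%:Z)%R.
Proof. by move=> hj; rewrite (nth_map 0) ?size_iota // nth_iota. Qed.

Lemma X_pos {x} : X_sigma x -> forall i n, exists k a p, [/\ 1 <= k, p + n <= size (sigma_iter k a) &
  forall j, j < n -> x (i + j%:Z)%R = nth false (sigma_iter k a) (p + j)].
Proof.
move=> hx i n; have [a [k [hk hin]]] := hx i n.
have [p [hp hn]] := @infix_nth _ _ hin.
rewrite size_subword in hp hn.
exists k, a, p; split => // j hj; rewrite -hn ?nth_subword //.
Qed.

Lemma pos_X x : (forall i n, exists k a p, [/\ 1 <= k, p + n <= size (sigma_iter k a) &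
  forall j, j < n -> x (i + j%:Z)%R = nth false (sigma_iter k a) (p + j)]) -> X_sigma x.
Proof.
move=> h i n; have [k [a [p [hk hs hn]]]] := h i n.
exists a, k; split => //; apply: (@nth_infix _ _ p); rewrite size_subword //.
by move=> j hj; rewrite nth_subword // hn.
Qed.

Lemma shift_X x : X_sigma x -> X_sigma (Defs.shift x).
Proof.
move=> hx; apply: pos_X => i n.
have [k [a [p [hk hs hn]]]] := X_pos hx (i + 1)%R n.
exists k, a, p; split => // j hj; rewrite /Defs.shift -hn //; congr x; lia.
Qed.

Definition evens0 (x : biseq) := forall j : int, x (2 * j)%R = false.

Lemma sigma_iter_pred k a : 1 <= k -> sigma_iter k a = sigma_word (sigma_iter k.-1 a).
Proof. by case: k => // k _; rewrite sigma_iterS. Qed.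

Lemma X0 x : X_sigma x -> evens0 x -> x 1%R || x 3%R.
Proof.
move=> hx he; have [k [a [p [hk hs hn]]]] := X_pos hx 0%R 4.
have h0 := hn 0 isT; rewrite add0r addn0 in h0.
have h1 := hn 1 isT; rewrite add0r in h1.
have h2 := hn 2 isT; rewrite add0r in h2.
have h3 := hn 3 isT; rewrite add0r in h3.
have e0 := he 0%R; have e2 := he 1%R; rewrite mulr0 in e0; rewrite mulr1 in e2.
rewrite (@sigma_iter_pred k a hk) in hs h0 h1 h2 h3.
rewrite h1 h3.
case: (boolP (odd p)) => op.
  have := @no00odd k.-1 a p op; rewrite -h0 -h2 e0 e2 => /(_ ltac:(lia)).
  by [].
have op1 : odd (p + 1) by rewrite addn1 /= op.
have := @no00odd k.-1 a (p+1) op1; rewrite -addnA => /(_ ltac:(lia)).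
by [].
Qed.

Lemma par_X x i d : X_sigma x -> x i = true -> x (i + (2 * d + 1)%N%:Z)%R = false.
Proof.
move=> hx hi; have [k [a [p [hk hs hn]]]] := X_pos hx i (2 * d + 2).
have h0 := hn 0 ltac:(lia); rewrite addr0 addn0 in h0.
have h1 := hn (2 * d + 1) ltac:(lia).
rewrite h1; rewrite h0 in hi.
rewrite (@sigma_iter_pred k a hk) nth_sigma in hi *.
move/andP: hi => [op _].
by rewrite nth_sigma oddD op addn1 /= oddM andFb.
Qed.

Definition decode (x : biseq) : biseq := fun j => ~~ x (2 * j + 1)%R.
Definition encode (y : biseq) : biseq :=
  fun j => if (j %% 2 == 0)%Z then false else ~~ y (j %/ 2)%Z.

Lemma encodeE y (M : int) (b : bool) : encode y (2 * M + b%:Z)%R = if b then ~~ y M else false.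
Proof.
rewrite /encode; case: b.
  have -> : ((2 * M + true%:Z) %% 2)%Z = 1%R by lia.
  have -> : ((2 * M + true%:Z) %/ 2)%Z = M by lia.
  by [].
by have -> : ((2 * M + false%:Z) %% 2)%Z = 0%R by lia.
Qed.

Lemma int_half (i : int) : exists M (b : bool), i = (2 * M + b%:Z)%R.
Proof.
exists (i %/ 2)%Z, ((i %% 2)%Z == 1%R).
case: eqP => h; lia.
Qed.

Lemma half_odd m : (2 * m).+1./2 = m.
Proof. by rewrite mul2n /= uphalf_double. Qed.

Lemma decode_X x : X_sigma x -> evens0 x -> X_sigma (decode x).
Proof.
move=> hx he; apply: pos_X => i n.
have [k [a [p [hk hs hn]]]] := X_pos hx (2 * i)%R (2 * n + 4).
have hk2 : 1 <= k.-1.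
  case: k hk hs {hn} => [|[|k]] //= _; rewrite size_sigma /=; lia.
rewrite (@sigma_iter_pred k a hk) in hs hn.
case: (boolP (odd p)) => op.
  have := @no00odd k.-1 a p op.
  have h0 := hn 0 ltac:(lia); rewrite addr0 addn0 in h0.
  have h2 := hn 2 ltac:(lia).
  rewrite -h0 -h2 he.
  have -> : (2 * i + 2%N%:Z)%R = (2 * (i + 1))%R by lia.
  by rewrite he /= => /(_ ltac:(lia)).
have hp := odd_double_half p; rewrite (negbTE op) add0n -muln2 in hp.
rewrite size_sigma -muln2 in hs.
exists k.-1, a, p./2; split => //; first lia.
move=> j hj; rewrite /decode.
have -> : (2 * (i + j%:Z) + 1)%R = (2 * i + (2 * j + 1)%N%:Z)%R by lia.
rewrite hn; last lia.
rewrite nth_sigma.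
have -> : p + (2 * j + 1) = (2 * (p./2 + j)).+1 by lia.
rewrite half_odd /= oddM /= negbK nthT_nthF //; lia.
Qed.

Lemma encode_X y : X_sigma y -> X_sigma (encode y).
Proof.
move=> hy; apply: pos_X => i n.
have [M [b ->]] := int_half i.
have [k [a [p [hk hs hn]]]] := X_pos hy M n.+1.
exists k.+1, a, (2 * p + b); split => //.
  rewrite sigma_iterS size_sigma -muln2; case: b; lia.
move=> j hj.
set t := b + j.
have ht := odd_double_half t; rewrite -muln2 in ht.
have -> : (2 * M + b%:Z + j%:Z)%R = (2 * (M + (t./2)%:Z) + (odd t)%:Z)%R.
  rewrite /t in ht *; lia.
rewrite encodeE sigma_iterS nth_sigma.
have -> : 2 * p + b + j = p.*2 + t by rewrite /t -mul2n; lia.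
rewrite oddD odd_double /= halfD odd_double /= doubleK.
case: (odd t) => //=; rewrite add0n nthT_nthF -?hn //.
- move: ht hj; rewrite /t; clear t; case: b => /=; lia.
- move: ht hj hs; rewrite /t; clear t; case: b => /=; lia.
Qed.

Lemma decode_encode y : decode (encode y) = y.
Proof.
apply: funext => j; rewrite /decode.
have -> : (2 * j + 1)%R = (2 * j + true%:Z)%R by [].
by rewrite encodeE negbK.
Qed.

Lemma encode_decode {x} : evens0 x -> encode (decode x) = x.
Proof.
move=> he; apply: funext => j; have [M [b ->]] := int_half j.
rewrite encodeE; case: b => /=.
  by rewrite /decode negbK.
by rewrite addr0 he.
Qed.

Lemma evens0_encode y : evens0 (encode y).
Proof.
move=> j; have -> : (2 * j)%R = (2 * j + false%:Z)%R by rewrite addr0.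
by rewrite encodeE.
Qed.

Lemma subword_cons (x : biseq) i n : subword x i n.+1 = x i :: subword x (i + 1)%R n.
Proof.
rewrite /subword /= addr0; congr (_ :: _).
rewrite -(addn0 1) iotaDl -map_comp; apply: eq_map => j /=; congr x; lia.
Qed.

Lemma subword_encode y J L : subword (encode y) (2 * J)%R (2 * L) = sigma_word (subword y J L).
Proof.
elim: L J => [|L IH] J; first by [].
rewrite mulnS !subword_cons sigma_cons.
have -> : (2 * J)%R = (2 * J + false%:Z)%R by rewrite addr0.
rewrite encodeE /=.
have -> : (2 * J + 0%:Z + 1)%R = (2 * J + true%:Z)%R by lia.
rewrite encodeE -IH; congr (_ :: _ :: _); congr subword; lia.
Qed.

Lemma subword_infix (x : biseq) i s n L : s + n <= L ->
  infix (subword x (i + s%:Z)%R n) (subword x i L).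
Proof.
move=> h; rewrite /subword.
have -> : L = s + (n + (L - s - n)) by lia.
rewrite iotaD iotaD map_cat map_cat.
have -> : [seq x (i + j%:Z)%R | j <- iota (0 + s) n] = [seq x (i + s%:Z + j%:Z)%R | j <- iota 0 n].
  rewrite add0n -(addn0 s) iotaDl -map_comp; apply: eq_map => j /=; congr x; lia.
exact: infix_infix.
Qed.

Definition f0 (m : int) : bool := odd (logn 2 `|m|%N).
Definition x0 : biseq := fun j => f0 (j + 1)%R.

Lemma f0_4 m : f0 (4 * m)%R = f0 m.
Proof.
rewrite /f0; have -> : `|(4 * m)%R|%N = 4 * `|m|%N by lia.
case: (posnP `|m|%N) => [->|hm]; first by rewrite muln0.
rewrite lognM // (_ : 4 = 2 ^ 2) // pfactorK //=.
by rewrite negbK.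
Qed.

Lemma logn2_odd k : k %% 2 = 1 -> logn 2 k = 0.
Proof. by move=> h; apply: logn_coprime; rewrite coprime2n; move: h; rewrite modn2; case: (odd k). Qed.

Lemma f0_odd m : f0 (2 * m + 1)%R = false.
Proof. by rewrite /f0 logn2_odd //; lia. Qed.

Lemma f0_4m2 m : f0 (4 * m + 2)%R = true.
Proof.
rewrite /f0; have -> : `|(4 * m + 2)%R|%N = 2 * `|(2 * m + 1)%R|%N by lia.
rewrite lognM //; last lia.
rewrite (@logn2_odd `|(2 * m + 1)%R|%N); last lia.
by have := @pfactorK 2 1 isT; rewrite expn1 => ->.
Qed.

Definition y0 := decode x0.

Lemma evens0_x0 : evens0 x0.
Proof. move=> j; rewrite /x0; exact: f0_odd. Qed.

Lemma evens0_y0 : evens0 y0.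
Proof.
move=> j; rewrite /y0 /decode /x0.
have -> : (2 * (2 * j) + 1 + 1)%R = (4 * j + 2)%R by lia.
by rewrite f0_4m2.
Qed.

Lemma decode_y0 : decode y0 = x0.
Proof.
apply: funext => j; rewrite /y0 /decode /x0 negbK.
have -> : (2 * (2 * j + 1) + 1 + 1)%R = (4 * (j + 1))%R by lia.
by rewrite f0_4.
Qed.

Lemma x0_enc : x0 = encode y0.
Proof. by rewrite /y0 (encode_decode evens0_x0). Qed.

Lemma y0_enc : y0 = encode x0.
Proof. by rewrite -{1}(encode_decode evens0_y0) decode_y0. Qed.

Lemma subword_x0_4 J L : subword x0 (4 * J)%R (4 * L) =
  sigma_word (sigma_word (subword x0 J L)).
Proof.
have -> : (4 * J)%R = (2 * (2 * J))%R by lia.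
have -> : 4 * L = 2 * (2 * L) by lia.
rewrite {1}x0_enc subword_encode y0_enc subword_encode //.
Qed.

Lemma subword_x0_pow m J L : subword x0 ((4 ^ m)%:Z * J)%R (4 ^ m * L) =
  iter (2 * m) sigma_word (subword x0 J L).
Proof.
elim: m => [|m IH]; first by rewrite expn0 mul1r mul1n.
have -> : ((4 ^ m.+1)%:Z * J)%R = (4 * ((4 ^ m)%:Z * J))%R by rewrite expnS PoszM mulrA.
rewrite expnS -mulnA subword_x0_4 IH.
by rewrite mulnS !iterS.
Qed.

Lemma infix_iter n u v : infix u v -> infix (iter n sigma_word u) (iter n sigma_word v).
Proof. elim: n => [//|n IH] /IH h; rewrite !iterS; exact: infix_sigma. Qed.

Lemma x0_2 J : infix (subword x0 J 2) [:: false; true; false; false].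
Proof.
rewrite !subword_cons /subword /=.
have [M [b ->]] := int_half J.
case: b.
  have -> : (2 * M + true%:Z + 1)%R = (2 * (M + 1))%R by lia.
  by rewrite evens0_x0; case: (x0 _).
have -> : (2 * M + false%:Z)%R = (2 * M)%R by lia.
by rewrite evens0_x0; case: (x0 _).
Qed.

Lemma X_x0 : X_sigma x0.
Proof.
move=> i n; exists false, (2 * n + 2); split; first lia.
set N := 4 ^ n.
have hN : 0 < N by rewrite expn_gt0.
have hnN : n < N by apply: ltn_expl.
have hd := divz_eq i (Posz N).
have h0 := @modz_ge0 i (Posz N) ltac:(lia).
have h1 := @ltz_pmod i (Posz N) ltac:(lia).
set J := (i %/ (Posz N))%Z in hd.
set s := `|(i %% (Posz N))%Z|%N.
have ei : i = ((Posz N) * J + (Posz s))%R by rewrite /s; lia.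
rewrite ei.
apply: (infix_trans (@subword_infix x0 _ s n (N * 2) _)); first by rewrite /s; lia.
rewrite subword_x0_pow /sigma_iter iterD.
exact: infix_iter (x0_2 J).
Qed.

Fixpoint val3 (z : Z3) (n : nat) : nat :=
  if n is m.+1 then val3 z m + nat_of_ord (z m) * 3 ^ m else 0.

Lemma val3S z n : val3 z n.+1 = val3 z n + nat_of_ord (z n) * 3 ^ n.
Proof. by []. Qed.

Lemma digit_lt (z : Z3) n : nat_of_ord (z n) < 3.
Proof. exact: ltn_ord. Qed.

Lemma val3_lt z n : val3 z n < 3 ^ n.
Proof.
elim: n => [//|n IH]; rewrite val3S expnS.
have := digit_lt z n; have := expn_gt0 3 n; nia.
Qed.

Lemma val3_mod z n : val3 z n.+1 %% 3 ^ n = val3 z n.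
Proof. by rewrite val3S addnC modnMDl modn_small // val3_lt. Qed.

Lemma digit_val3 z n : nat_of_ord (z n) = val3 z n.+1 %/ 3 ^ n.
Proof. by rewrite val3S addnC divnMDl ?expn_gt0 // divn_small ?val3_lt ?addn0. Qed.

Lemma val3_inj z z' : (forall n, val3 z n = val3 z' n) -> z = z'.
Proof.
move=> h; apply: funext => n; apply: val_inj => /=.
by rewrite !digit_val3 h.
Qed.

Lemma val3_top z n : (forall m, m < n -> nat_of_ord (z m) = 2) <-> (val3 z n).+1 = 3 ^ n.
Proof.
elim: n => [|n IH]; first by split.
rewrite val3S expnS.
have hP := expn_gt0 3 n; have hv := val3_lt z n; have hd3 := digit_lt z n.
split.
  move=> h; have h2 := h n (ltnSn n).
  have := (IH.1 (fun m hm => h m (ltnW hm))); lia.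
move=> e.
have dn : nat_of_ord (z n) = 2.
  move: (nat_of_ord (z n)) hd3 e => d.
  case: d => [|[|[|d]]] //= _; lia.
have hv2 : (val3 z n).+1 = 3 ^ n by rewrite dn in e; lia.
move=> m; rewrite ltnS leq_eqVlt => /orP [/eqP -> | hm] //.
exact: (IH.2 hv2).
Qed.

Lemma forall_ordP (P : nat -> bool) n :
  reflect (forall m, m < n -> P m) [forall m : 'I_n, P m].
Proof.
apply: (iffP forallP) => h.
  by move=> m hm; exact: (h (Ordinal hm)).
by move=> m; apply: h.
Qed.

Lemma val3_succ z n : val3 (Z3_succ z) n = ((val3 z n).+1) %% 3 ^ n.
Proof.
elim: n => [|n IH]; first by rewrite modn1.
rewrite val3S IH expnS.
have hP : 0 < 3 ^ n by rewrite expn_gt0.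
have hv := val3_lt z n.
rewrite /Z3_succ; case: (forall_ordP (fun m => nat_of_ord (z m) == 2) n) => h.
  have e : (val3 z n).+1 = 3 ^ n by apply/val3_top => m hm; apply/eqP/h.
  rewrite e modnn add0n inordK; last by rewrite ltn_mod.
  rewrite val3S addnC -addnS e.
  move: (nat_of_ord (z n)) (digit_lt z n) => d.
  case: d => [|[|[|d]]] //= _.
  - rewrite mul0n add0n (modn_small (_ : 1 < 3)) // mul1n modn_small //; lia.
  - rewrite (modn_small (_ : 2 < 3)) // modn_small //; lia.
  - by rewrite modnn (_ : 2 * 3 ^ n + 3 ^ n = 3 * 3 ^ n) ?modnn //; lia.
have hlt : (val3 z n).+1 < 3 ^ n.
  have : (val3 z n).+1 != 3 ^ n.
    apply/eqP => e; apply: h => m hm; apply/eqP; exact: ((val3_top z n).2 e).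
  rewrite neq_ltn => /orP [//|]; lia.
rewrite (modn_small hlt) val3S modn_small //.
have := digit_lt z n; nia.
Qed.

Definition mkZ3 (f : nat -> nat) : Z3 := fun n => inord (f n.+1 %/ 3 ^ n).

Lemma val3_mk f : (forall n, f n.+1 %% 3 ^ n = f n) -> (forall n, f n < 3 ^ n) ->
  forall n, val3 (mkZ3 f) n = f n.
Proof.
move=> hc hl; elim=> [|n IH]; first by move: (hl 0); rewrite expn0 /=; case: (f 0).
rewrite val3S IH /mkZ3 inordK; last first.
  by rewrite ltnS -ltnS ltn_divLR ?expn_gt0 // -expnS.
by rewrite -{1}(hc n) addnC -divn_eq.
Qed.

Fixpoint h3 n := if n is m.+1 then h3 m + 3 ^ m else 1.

Lemma h3E n : 2 * h3 n = (3 ^ n).+1.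
Proof. elim: n => [//|n IH] /=; rewrite expnS; lia. Qed.

Definition halfZ (z : Z3) : Z3 := mkZ3 (fun n => (val3 z n * h3 n) %% 3 ^ n).
Definition doubleZ (z : Z3) : Z3 := mkZ3 (fun n => (val3 z n * 2) %% 3 ^ n).

Lemma dvd3S n : 3 ^ n %| 3 ^ n.+1.
Proof. by rewrite dvdn_exp2l. Qed.

Lemma val3_half z n : val3 (halfZ z) n = (val3 z n * h3 n) %% 3 ^ n.
Proof.
apply: val3_mk => [m|m]; last by rewrite ltn_mod expn_gt0.
rewrite (modn_dvdm _ (dvd3S m)) /= -modnMml val3_mod.
by rewrite mulnDr addnC modnMDl.

Qed.

Lemma val3_double z n : val3 (doubleZ z) n = (val3 z n * 2) %% 3 ^ n.
Proof.
apply: val3_mk => [m|m]; last by rewrite ltn_mod expn_gt0.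
by rewrite (modn_dvdm _ (dvd3S m)) /= -modnMml val3_mod.
Qed.

Lemma half_double z : halfZ (doubleZ z) = z.
Proof.
apply: val3_inj => n; rewrite val3_half val3_double modnMml -mulnA h3E.
by rewrite mulnS addnC modnMDl modn_small // val3_lt.
Qed.

Lemma double_half z : doubleZ (halfZ z) = z.
Proof.
apply: val3_inj => n; rewrite val3_double val3_half modnMml -mulnA (mulnC (h3 n)) h3E.
by rewrite mulnS addnC modnMDl modn_small // val3_lt.
Qed.

Lemma modS_mod a P : (a %% P).+1 %% P = a.+1 %% P.
Proof. by rewrite -[in LHS]addn1 modnDml addn1. Qed.

Lemma half_succ2 z : halfZ (Z3_succ (Z3_succ z)) = Z3_succ (halfZ z).
Proof.
apply: val3_inj => n; rewrite val3_half !val3_succ val3_half.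
set v := val3 z n; set P := 3 ^ n; set h := h3 n.
rewrite modS_mod modnMml modS_mod.
have e := h3E n; rewrite -/P -/h in e.
by rewrite -addn2 mulnDl e addnS -addSn modnDr.
Qed.

Lemma near_coord {I : eqType} {K : I -> discreteTopologicalType} (f : prod_topology K) (i : I) :
  \forall g \near f, g i = f i.
Proof.
have := (discrete_cvg _ _ _).1 (@proj_continuous I K i f).
move=> h; apply: h; apply: fmap_filter; exact: (@nbhs_filter (prod_topology K) f).
Qed.
Definition K3 : nat -> discreteTopologicalType := fun _ => discrete_topology 'I_3.
Definition KB : int -> discreteTopologicalType := fun _ => bool.
Lemma near3 (z : Z3) n : \forall z' \near z, z' n = z n.
Proof. exact: (@near_coord nat K3 z n). Qed.
Lemma nearB (x : biseq) j : \forall y \near x, y j = x j.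
Proof. exact: (@near_coord int KB x j). Qed.
#[local] Instance Z3_filter (z : Z3) : Filter (nbhs z) := @nbhs_filter Z3 z.
#[local] Instance biseq_filter (x : biseq) : Filter (nbhs x) := @nbhs_filter biseq x.
Lemma near_val3 (z : Z3) n : \forall z' \near z, val3 z' n = val3 z n.
Proof.
elim: n => [|n IH]; first by apply: filterS (near3 z 0) => z' _.
apply: filterS2 IH (near3 z n) => z' h1 h2.
by rewrite !val3S h1 h2.
Qed.

Lemma ptws_cont (T : topologicalType) (I : choiceType) (K : I -> discreteTopologicalType)
  (g : T -> prod_topology K) :
  (forall x i, \forall y \near x, g y i = g x i) -> continuous g.
Proof.
move=> H x; apply/cvg_sup => i.
move: x; apply/(@continuousP _ (initial_topology (@^~ i))) => A [B oB E].
rewrite -E openE => x Bx; rewrite /interior; apply: filterS (H x i) => y /= ->.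
exact: Bx.
Qed.

Lemma halfZ_cont : continuous halfZ.
Proof.
apply: (@ptws_cont _ nat K3) => z n; apply: filterS (near_val3 z n.+1) => z' h.
by rewrite /halfZ /mkZ3 h.
Qed.

Lemma doubleZ_cont : continuous doubleZ.
Proof.
apply: (@ptws_cont _ nat K3) => z n; apply: filterS (near_val3 z n.+1) => z' h.
by rewrite /doubleZ /mkZ3 h.
Qed.

Lemma decode_cont : continuous decode.
Proof.
apply: (@ptws_cont _ int KB) => x j; apply: filterS (nearB x (2 * j + 1)%R) => y h.
by rewrite /decode h.
Qed.

Lemma encode_cont : continuous encode.
Proof.
apply: (@ptws_cont _ int KB) => x j; apply: filterS (nearB x (j %/ 2)%Z) => y h.
by rewrite /encode h.
Qed.

Lemma nearFst (p : biseq * Z3) j : \forall q \near p, q.1 j = p.1 j.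
Proof.
exists ([set y | y j = p.1 j], setT) => /=; first by split; [exact: nearB | exact: filterT].
by move=> [x z] [/= h _].
Qed.

Definition phiM (p : biseq * Z3) : biseq * Z3 := (decode p.1, halfZ p.2).
Definition psiM (p : biseq * Z3) : biseq * Z3 := (encode p.1, doubleZ p.2).

Lemma pair_cont (f : biseq -> biseq) (g : Z3 -> Z3) : continuous f -> continuous g ->
  continuous (fun p : biseq * Z3 => (f p.1, g p.2)).
Proof.
move=> cf cg p S [[A B] /= [hA hB] hAB].
exists (f @^-1` A, g @^-1` B) => /=; first by split; [exact: cf | exact: cg].
by move=> [x z] [/= ha hb]; apply: hAB; split.
Qed.

Lemma phiM_cont : continuous phiM.
Proof. exact: pair_cont decode_cont halfZ_cont. Qed.

Lemma psiM_cont : continuous psiM.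
Proof. exact: pair_cont encode_cont doubleZ_cont. Qed.

Definition Uset : set (biseq * Z3) := [set p | X_sigma p.1 /\ evens0 p.1].

Lemma odd1_evens0 x j : X_sigma x -> x (2 * j + 1)%R = true -> evens0 x.
Proof.
move=> hx hj m; case: (boolP (x (2 * m)%R)) => // h2m.
case: (boolP (j < m)%R) => hjm.
  have := @par_X x _ `|(m - j - 1)%R|%N hx hj.
  have -> : (2 * j + 1 + (2 * `|(m - j - 1)%R|%N + 1)%N%:Z)%R = (2 * m)%R by lia.
  by move=> h; rewrite h in h2m.
have := @par_X x _ `|(j - m)%R|%N hx h2m.
have -> : (2 * m + (2 * `|(j - m)%R|%N + 1)%N%:Z)%R = (2 * j + 1)%R by lia.
by rewrite hj.
Qed.

Lemma shift2_U p : Uset p -> Uset (iter 2 Tmap p).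
Proof.
case: p => x z [hx he]; rewrite /= /Tmap /=; split.
  exact/shift_X/shift_X.
move=> j; rewrite /Defs.shift.
rewrite /=; have -> : (2 * j + 1 + 1)%R = (2 * (j + 1))%R by lia.
exact: he.
Qed.

Lemma notU_T p : Uset p -> ~ Uset (Tmap p).
Proof.
case: p => x z [hx he] [_ he'] /=.
have := @X0 x hx he.
have h1 : x ((2 * 0)%R + 1)%R = false := he' 0%R.
have h3 : x ((2 * 1)%R + 1)%R = false := he' 1%R.
have e1 : (((2 * 0)%R + 1)%R : int) = 1%R by lia.
have e3 : (((2 * 1)%R + 1)%R : int) = 3%R by lia.
rewrite e1 in h1; rewrite e3 in h3.
by rewrite h1 h3.
Qed.

#[local] Instance BZ_filter (p : biseq * Z3) : Filter (nbhs p) := @nbhs_filter (biseq * Z3)%type p.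
Lemma openO : open [set p : biseq * Z3 | exists j, p.1 (2 * j + 1)%R = true].
Proof.
rewrite openE => p [j hj]; rewrite /interior.
apply: filterS (nearFst p (2 * j + 1)%R) => q hq; exists j; by rewrite hq.
Qed.

Lemma closedE : closed [set p : biseq * Z3 | evens0 p.1].
Proof.
rewrite -[X in closed X]setCK; apply: open_closedC.
rewrite openE => p /= nE; rewrite /interior.
have [j hj] : exists j, p.1 (2 * j)%R = true.
  apply: contrapT => hn; apply: nE => j; apply/negbTE/negP => h; apply: hn; by exists j.
apply: filterS (nearFst p (2 * j)%R) => q hq hE.
by move: (hE j); rewrite hq hj.
Qed.

Theorem mainTheorem13 : self_induced Xspace Tmap.
Proof.
exists Uset; split; [split|split].
- by move=> p [].
- exists (x0, (fun _ => ord0) : Z3); split; [exact: X_x0 | exact: evens0_x0].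
- move=> e.
  have : Uset (Defs.shift x0, (fun _ => ord0) : Z3).
    rewrite e /Xspace /=; exact/shift_X/X_x0.
  move=> [_ he].
  have : x0 ((2 * 0)%R + 1)%R = false := he 0%R.
  rewrite /x0 (_ : ((2 * 0)%R + 1 + 1)%R = (4 * 0 + 2)%R); last by lia.
  by rewrite f0_4m2.
- apply/open_subspaceP; exists [set p : biseq * Z3 | exists j, p.1 (2 * j + 1)%R = true].
    exact: openO.
  apply/seteqP; split => p /=.
    move=> [[j hj] hX]; split => //; split => //; exact: odd1_evens0 hj.
  move=> [[hX he] _]; split => //.
  have := @X0 _ hX he; case/orP => h.
    by exists 0%R; rewrite mulr0 add0r.
  by exists 1%R; rewrite mulr1.
- apply/closed_subspaceP; exists [set p : biseq * Z3 | evens0 p.1]; first exact: closedE.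
  apply/seteqP; split => p /=.
    by move=> [he hX]; split.
  by move=> [[_ he] hX]; split.
- move=> p hp; exists 2; split => //; exact: (@shift2_U p hp).
exists phiM, psiM; split.
- exact/continuous_subspaceT/phiM_cont.
- exact/continuous_subspaceT/psiM_cont.
- case=> x z [hx he]; split; first exact: decode_X.
  by rewrite /phiM /psiM /= (encode_decode he) double_half.
- case=> y z hy; split.
    split; [exact: encode_X | exact: evens0_encode].
  by rewrite /phiM /psiM /= decode_encode half_double.
- move=> p n hp hn hU hmin.
  have n2 : n = 2.
    case: n hn hU hmin => [|[|[|n]]] // _ hU hmin.
      by case: (@notU_T p hp hU).
    by exfalso; apply: (hmin 2) => //; exact: (@shift2_U p hp).
  subst n; case: p hp {hU hmin} => x z [hx he].
  rewrite /phiM /Tmap /=; congr (_, _); last exact: half_succ2.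
  apply: funext => j; rewrite /decode; unfold Defs.shift; congr (~~ x _); lia.
Qed.
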